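(* Let $m \geqslant 5$ and $k \geqslant 2$ be integers, let $\Delta = \{1,\ldots,m\}^k$, and let $M = S_m \wr S_k$ act on $\Delta$ in product action, identified with a subgroup of $\mathrm{Sym}(\Delta) \cong S_{m^k}$. Let $u = (1\,2\,\cdots\,m) \in S_m$ if $m$ is odd and $u = (1\,2\,\cdots\,m-1)$ if $m$ is even, and let $U = \langle u\rangle$. Let $i \in \{2,\ldots,k\}$ and $r \in \{1,\ldots,m\}$, let $T_r$ be the stabiliser of $r$ in $S_m$, and let $W_i$ be the pointwise stabiliser of $1$ and $i$ in $S_k$. Then there exists $x \in \mathrm{Alt}(\Delta)$ such that \[ M \cap M^{x} = \left(U \times (S_m)^{i-2} \times T_r \times (S_m)^{k-i}\right) \rtimes W_i, \] i.e. $M \cap M^x$ consists of the elements $(v_1,\ldots,v_k)w \in M$ with $v_1 \in U$, $v_i \in T_r$ and $w \in W_i$.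
   Context: In the product action, the base group $(S_m)^k$ acts coordinatewise on $\Delta$ and the top group $S_k$ permutes coordinates. *)

(* Defs.v *)
From mathcomp Require Import all_boot all_fingroup alt.
From mathcomp Require Import zify.
Set Implicit Arguments. Unset Strict Implicit. Unset Printing Implicit Defensive.
Local Open Scope group_scope.

(* Points of {1..m} are 'I_m (point j+1 <-> ordinal j); coordinates {1..k}
   are 'I_k (coordinate j+1 <-> ordinal j).  Delta = {1..m}^k. *)
Definition Delta (m k : nat) := {ffun 'I_k -> 'I_m}.

Definition prodact (m k : nat) (v : {ffun 'I_k -> {perm 'I_m}}) (w : {perm 'I_k})
  (d : Delta m k) : Delta m k :=
  [ffun j => v (w^-1 j) (d (w^-1 j))].

Definition Mprod (m k : nat) : {set {perm Delta m k}} :=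
  [set p : {perm Delta m k} | [exists v : {ffun 'I_k -> {perm 'I_m}},
     [exists w : {perm 'I_k}, [forall d, p d == prodact v w d]]]].

Definition ulen (m : nat) := if odd m then m else m.-1.

(* u = (1 2 ... n) with n = ulen m, on 0-based points: j |-> j+1 for j+1 < n,
   n-1 |-> 0, and j fixed for j >= n. *)
Definition ucyc_nat (m j : nat) : nat :=
  if j.+1 == ulen m then 0 else if j.+1 < ulen m then j.+1 else j.

Definition ucyc (m : nat) (j : 'I_m) : 'I_m := insubd j (ucyc_nat m j).

Lemma ulen_le m : ulen m <= m.
Proof. rewrite /ulen; case: (odd m) => //; exact: leq_pred. Qed.

Lemma ucyc_nat_lt m (j : 'I_m) : ucyc_nat m j < m.
Proof.
have := ulen_le m; have := ltn_ord j; rewrite /ucyc_nat.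
case: eqP => [_|_]; first lia. case: ifP => H; lia.
Qed.

Lemma ucyc_inj m : injective (@ucyc m).
Proof.
move=> a b; rewrite /ucyc => /(congr1 val).
rewrite !val_insubd !ucyc_nat_lt => E; apply: val_inj => /=.
have La := ltn_ord a; have Lb := ltn_ord b.
move: E; rewrite /ucyc_nat.
case Ea: (a.+1 == ulen m); case Eb: (b.+1 == ulen m);
case Fa: (a.+1 < ulen m); case Fb: (b.+1 < ulen m); lia.
Qed.

Definition u (m : nat) : {perm 'I_m} := perm (@ucyc_inj m).

Definition U (m : nat) : {set {perm 'I_m}} := <[u m]>.

Definition Tstab (m : nat) (r : 'I_m) : {set {perm 'I_m}} :=
  [set s : {perm 'I_m} | s r == r].

Definition Wstab (k : nat) (i : 'I_k) : {set {perm 'I_k}} :=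
  [set w : {perm 'I_k} | [forall j : 'I_k, ((val j == 0) || (j == i)) ==> (w j == j)]].

Definition Hsub (m k : nat) (i : 'I_k) (r : 'I_m) : {set {perm Delta m k}} :=
  [set p : {perm Delta m k} | [exists v : {ffun 'I_k -> {perm 'I_m}},
     [exists w : {perm 'I_k},
       [&& [forall j : 'I_k, (val j == 0) ==> (v j \in U m)],
           v i \in Tstab r, w \in Wstab i &
           [forall d, p d == prodact v w d]]]]].

(* Main.v *)
Require Import Defs.
From mathcomp Require Import all_boot all_fingroup alt.
From mathcomp Require Import zify.
Set Implicit Arguments. Unset Strict Implicit. Unset Printing Implicit Defensive.
Local Open Scope group_scope.

Lemma ulen_odd m : 0 < m -> odd (ulen m).
Proof. rewrite /ulen; case: m => [|n] // _ /=; by case H: (odd n) => /=; rewrite ?H. Qed.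

Lemma ulen_ge m : 5 <= m -> 5 <= ulen m /\ m <= (ulen m).+1.
Proof.
move=> hm; have ho := ulen_odd (leq_trans (isT : 0 < 5) hm); move: ho; rewrite /ulen; case: ifP => Hm ho; first lia.
case: m hm Hm ho => // n hn Hn ho /=. split; last lia.
have : n != 4 by apply/eqP => E; rewrite E in ho.
lia.
Qed.

Lemma u_val m p : nat_of_ord (u m p) = ucyc_nat m p.
Proof. by rewrite /u permE /ucyc val_insubd ucyc_nat_lt. Qed.

Lemma u_lt m (p : 'I_m) : 2 <= ulen m -> nat_of_ord p < ulen m -> nat_of_ord (u m p) = (nat_of_ord p).+1 %% ulen m.
Proof.
move=> h2 hp; rewrite u_val /ucyc_nat.
case: eqP => [E|NE]; first by rewrite E modnn.
rewrite ifT; last lia. rewrite modn_small //; lia.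
Qed.

Lemma u_fix m (p : 'I_m) : ulen m <= nat_of_ord p -> u m p = p.
Proof.
move=> hp; apply: ord_inj; rewrite u_val /ucyc_nat.
case: eqP => [E|NE]; first lia. rewrite ifF //; lia.
Qed.

Lemma uexp_lt m (p : 'I_m) j : 2 <= ulen m -> nat_of_ord p < ulen m ->
  nat_of_ord ((u m ^+ j) p) = (nat_of_ord p + j) %% ulen m.
Proof.
move=> h2 hp; elim: j => [|j IH]; first by rewrite expg0 perm1 addn0 modn_small.
rewrite expgSr permM u_lt //; last by rewrite IH ltn_mod; lia.
by rewrite -addn1 -modnDml IH modn_mod modnDml addn1 addnS.
Qed.

Lemma uexp_fix m (p : 'I_m) j : ulen m <= nat_of_ord p -> (u m ^+ j) p = p.
Proof.
move=> hp; elim: j => [|j IH]; first by rewrite expg0 perm1.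
by rewrite expgSr permM IH u_fix.
Qed.

Lemma u_sq m : 5 <= m -> exists s : {perm 'I_m}, s * s = u m.
Proof.
move=> hm; have [h5 hle] := ulen_ge hm; have ho := ulen_odd (leq_trans (isT : 0 < 5) hm).
exists (u m ^+ (ulen m).+1./2).
rewrite -expgD addnn.
have -> : ((ulen m).+1./2).*2 = (ulen m).+1.
  by rewrite -{2}(odd_double_half (ulen m).+1) /= ho.
apply/permP => p; case: (ltnP (nat_of_ord p) (ulen m)) => hp.
  apply: ord_inj; rewrite uexp_lt ?u_lt //; try lia.
  by rewrite addnS -addSn modnDr.
by rewrite uexp_fix // u_fix.
Qed.

Lemma u_centr m (s : {perm 'I_m}) : 5 <= m ->
  (forall p, u m (s p) = s (u m p)) -> s \in U m.
Proof.
move=> hm hs; have [h5 hle] := ulen_ge hm.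
have m0 : 0 < m by lia.
set z : 'I_m := Ordinal m0.
have cs : commute s (u m).
  by apply/permP => p; rewrite !permM hs.
have hq : nat_of_ord (s z) < ulen m.
  rewrite ltnNge; apply/negP => hq.
  have := hs z; rewrite u_fix // => /perm_inj /(congr1 (@nat_of_ord m)).
  rewrite u_lt /= ?modn_small //; lia.
have -> : s = u m ^+ nat_of_ord (s z).
  apply/permP => p; case: (ltnP (nat_of_ord p) (ulen m)) => hp.
    have Ep : p = (u m ^+ nat_of_ord p) z.
      by apply: ord_inj; rewrite uexp_lt //=; try lia; rewrite modn_small.
    have cx := commuteX (nat_of_ord p) cs.
    rewrite Ep -(permM (u m ^+ p) s) -cx !permM.
    apply: ord_inj.
    have hz : nat_of_ord z < ulen m by rewrite /=; lia.
    have h2 : 1 < ulen m by lia.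
    have hpz : nat_of_ord ((u m ^+ p) z) < ulen m by rewrite uexp_lt // ltn_mod; lia.
    rewrite (uexp_lt _ h2 hq) (uexp_lt _ h2 hpz) (uexp_lt _ h2 hz) /= add0n (modn_small hp).
    by rewrite addnC.
  rewrite uexp_fix //.
  have hsp : ulen m <= nat_of_ord (s p).
    rewrite leqNgt; apply/negP => hl.
    have := hs p; rewrite (u_fix hp) => /(congr1 (@nat_of_ord m)); rewrite u_lt //; try lia.
    case: (eqVneq (nat_of_ord (s p)).+1 (ulen m)) => [e|ne]; first by rewrite e modnn; lia.
    rewrite modn_small; lia.
  apply: ord_inj. have := ltn_ord p; have := ltn_ord (s p); lia.
exact: mem_cycle.
Qed.

Definition tauf m k (i : 'I_k) (r : 'I_m) (c : {perm 'I_m}) (d : Delta m k) : Delta m k :=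
  if (d i == r) && ((i : nat) != 0) then [ffun j : 'I_k => if (j : nat) == 0 then c (d j) else d j] else d.

Lemma tauf_i m k (i : 'I_k) (r : 'I_m) c (d : Delta m k) : tauf i r c d i = d i.
Proof. rewrite /tauf; case: ifP => // /andP [_ h]; by rewrite ffunE (negbTE h). Qed.

Lemma tauf_ne0 m k (i : 'I_k) (r : 'I_m) c (d : Delta m k) (j : 'I_k) : (j : nat) != 0 -> tauf i r c d j = d j.
Proof. move=> h; rewrite /tauf; case: ifP => // _; by rewrite ffunE (negbTE h). Qed.

Lemma tauf_0 m k (i : 'I_k) (r : 'I_m) c (d : Delta m k) (j : 'I_k) : (i : nat) != 0 -> (j : nat) == 0 ->
  tauf i r c d j = if d i == r then c (d j) else d j.
Proof. move=> hi h; rewrite /tauf hi andbT; case: ifP => // _; by rewrite ffunE h. Qed.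

Lemma tauf_id m k (i : 'I_k) (r : 'I_m) c (d : Delta m k) : d i != r -> tauf i r c d = d.
Proof. by move=> h; rewrite /tauf (negbTE h). Qed.

Lemma tauf_inj m k (i : 'I_k) (r : 'I_m) c : injective (tauf i r c).
Proof.
move=> a b E. have Ei : a i = b i by have := congr1 (fun f : Delta m k => f i) E; rewrite !tauf_i.
move: E; rewrite /tauf Ei; case: ifP => // _ /ffunP E; apply/ffunP => j.
have := E j; rewrite !ffunE; case: ifP => // _; exact: perm_inj.
Qed.

Definition tau m k (i : 'I_k) (r : 'I_m) (c : {perm 'I_m}) : {perm Delta m k} :=
  perm (@tauf_inj m k i r c).

Lemma tauM m k (i : 'I_k) (r : 'I_m) c c' : tau i r c * tau i r c' = tau i r (c * c').
Proof.
apply/permP => d; rewrite permM !permE.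
case: (eqVneq (i : nat) 0) => hi.
  by rewrite /tauf hi !andbF.
apply/ffunP => j; case: (boolP ((j : nat) == 0)) => hj.
  rewrite (tauf_0 _ _ _ hi hj) tauf_i (tauf_0 _ _ _ hi hj) (tauf_0 _ _ _ hi hj).
  by case: (d i == r); rewrite ?permM.
by rewrite !tauf_ne0.
Qed.

Lemma tau_even m k (i : 'I_k) (r : 'I_m) (hm : 5 <= m) : tau i r (u m) \in Alt (Delta m k).
Proof.
have [s <-] := u_sq hm.
by rewrite Alt_even -tauM odd_permM addbb.
Qed.

Definition cst m k (z : 'I_m) : Delta m k := [ffun _ => z].
Definition upd m k (d : Delta m k) (b : 'I_k) (y : 'I_m) : Delta m k :=
  [ffun j => if j == b then y else d j].

Lemma prodactE m k v w (d : Delta m k) j : prodact v w d j = v (w^-1 j) (d (w^-1 j)).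
Proof. by rewrite ffunE. Qed.

Lemma avoid2 m (a b : 'I_m) : 3 <= m -> exists y : 'I_m, (y != a) && (y != b).
Proof.
move=> hm.
have h0 : 0 < m by lia. have h1 : 1 < m by lia. have h2 : 2 < m by lia.
case E0: ((Ordinal h0 != a) && (Ordinal h0 != b)); first by exists (Ordinal h0).
case E1: ((Ordinal h1 != a) && (Ordinal h1 != b)); first by exists (Ordinal h1).
exists (Ordinal h2). move: E0 E1; rewrite -!val_eqE /=. lia.
Qed.

Lemma cstE m k (z : 'I_m) (j : 'I_k) : cst k z j = z.
Proof. by rewrite ffunE. Qed.
Lemma updE m k (d : Delta m k) b y j : upd d b y j = if j == b then y else d j.
Proof. by rewrite ffunE. Qed.

Lemma core m k (i : 'I_k) (r : 'I_m) (hm : 5 <= m) (hi : 0 < i) v w v' w' :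
  (forall d, tauf i r (u m) (prodact v' w' d) = prodact v w (tauf i r (u m) d)) ->
  [/\ forall j : 'I_k, (j : nat) == 0 -> v j \in U m, v i r = r,
      forall j : 'I_k, (j : nat) == 0 -> w j = j & w i = i].
Proof.
move=> E.
have hi' : (i : nat) != 0 by lia.
have m0 : 0 < m by lia.
set z : 'I_m := Ordinal m0.
have [h5 hle] := ulen_ge hm.
have cz : u m z != z.
  apply/negP => /eqP /(congr1 (@nat_of_ord m)); rewrite u_lt /= ?modn_small //; lia.
have Ej : forall d j, tauf i r (u m) (prodact v' w' d) j = prodact v w (tauf i r (u m) d) j.
  by move=> d j; rewrite E.
have [z0 /andP [z0r _]] := avoid2 r r (ltnW (ltnW hm)).
have [y /andP [yr yz0]] := avoid2 r z0 (ltnW (ltnW hm)).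
have SA : forall j : 'I_k, (j : nat) != 0 -> w'^-1 j = w^-1 j.
  move=> j hj; case: (eqVneq (w'^-1 j) (w^-1 j)) => // nb; exfalso.
  set b := w^-1 j; set b' := w'^-1 j.
  have e1 := Ej (cst k z0) j.
  have e2 := Ej (upd (cst k z0) b y) j.
  rewrite tauf_ne0 // tauf_id ?cstE // !prodactE !cstE in e1.
  rewrite tauf_ne0 // tauf_id ?updE ?cstE in e2; last by case: ifP.
  rewrite !prodactE !updE !cstE eqxx -/b -/b' (negbTE nb) e1 in e2.
  by move/perm_inj: e2 => /eqP; rewrite eq_sym (negbTE yz0).
have SB : forall j : 'I_k, (j : nat) != 0 ->
    ((w^-1 j : 'I_k) : nat) != 0 /\ v' (w^-1 j) = v (w^-1 j).
  move=> j hj; set b := w^-1 j.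
  have eq : forall d : Delta m k, v' b (d b) = v b (tauf i r (u m) d b).
    by move=> d; have := Ej d j; rewrite tauf_ne0 // !prodactE SA.
  case: (boolP ((b : nat) == 0)) => hb.
    have bi : (i == b) = false.
      by apply/negbTE; apply/negP => /eqP ib; rewrite -ib in hb; rewrite hb in hi'.
    have e1 := eq (upd (upd (cst k z0) i r) b z).
    have e2 := eq (upd (cst k z0) b z).
    rewrite tauf_0 // !updE bi eqxx cstE eqxx in e1.
    rewrite tauf_id in e2; last by rewrite !updE bi cstE.
    rewrite !updE eqxx e1 in e2.
    rewrite eqxx in e2. by move/perm_inj: e2 => /eqP; rewrite (negbTE cz).
  split=> //; apply/permP => p.
  have := eq (upd (cst k z0) b p); by rewrite tauf_ne0 // !updE eqxx.
have SC : forall j : 'I_k, (j : nat) == 0 -> w j = j /\ w' j = j.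
  move=> j hj; split.
    case: (boolP (((w j) : nat) == 0)) => h.
      by apply: ord_inj; move/eqP: h => ->; move/eqP: hj => ->.
    have := (SB _ h).1; by rewrite permK hj.
  case: (boolP (((w' j) : nat) == 0)) => h.
    by apply: ord_inj; move/eqP: h => ->; move/eqP: hj => ->.
  have := (SB _ h).1; by rewrite -SA // permK hj.
have SD : forall b : 'I_k, (b : nat) != 0 -> v' b = v b.
  move=> b hb.
  have hwb : ((w b) : nat) != 0.
    apply/negP => h.
    have [e _] := SC _ h.
    move: e => /perm_inj e; rewrite e in h; by rewrite (eqP h) in hb.
  by have [_] := SB _ hwb; rewrite permK.
set j0 : 'I_k := Ordinal (ltn_trans hi (ltn_ord i)).
have hj0 : (j0 : nat) == 0 by [].
have [wj0 w'j0] := SC j0 hj0.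
have wVj0 : w^-1 j0 = j0 by rewrite -{1}wj0 permK.
have w'Vj0 : w'^-1 j0 = j0 by rewrite -{1}w'j0 permK.
have ia : (i == j0) = false.
  by apply/negbTE; apply/eqP => ij; rewrite ij in hi'.
have ha : w'^-1 i != j0.
  apply/eqP => e; have : w' (w'^-1 i) = w' j0 by rewrite e.
  by rewrite permKV w'j0 => ij; rewrite ij in hi'.
have eq0 : forall d : Delta m k,
    (if v' (w'^-1 i) (d (w'^-1 i)) == r then u m (v' j0 (d j0)) else v' j0 (d j0))
    = v j0 (if d i == r then u m (d j0) else d j0).
  move=> d; have := Ej d j0.
  by rewrite (tauf_0 _ _ _ hi' hj0) !prodactE w'Vj0 wVj0 (tauf_0 _ _ _ hi' hj0).
move: ha eq0; set a := w'^-1 i => ha eq0.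
have [z1 /andP [z1r z1s]] := avoid2 r ((v' a)^-1 r) (ltnW (ltnW hm)).
have vz1 : v' a z1 != r.
  by apply/eqP => e; move: z1s; rewrite -e permK eqxx.
have aj : (a == j0) = false by apply/negbTE.
have E2 : forall p, v' j0 p = v j0 p.
  move=> p; have := eq0 (upd (cst k z1) j0 p).
  by rewrite !updE aj ia eqxx !cstE (negbTE vz1) (negbTE z1r).
have ai : a = i.
  case: (eqVneq a i) => // nai; exfalso.
  have := eq0 (upd (upd (cst k z1) i r) j0 z).
  rewrite !updE aj ia (negbTE nai) !eqxx !cstE (negbTE vz1) E2.
  by move/perm_inj => /eqP; rewrite eq_sym (negbTE cz).
rewrite ai in eq0.
have vir : v' i r = r.
  case: (eqVneq (v' i r) r) => // nr; exfalso.
  have := eq0 (upd (upd (cst k z1) i r) j0 z).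
  rewrite !updE ia !eqxx (negbTE nr) E2.
  by move/perm_inj => /eqP; rewrite eq_sym (negbTE cz).
have comm : forall p, u m (v j0 p) = v j0 (u m p).
  move=> p; have := eq0 (upd (upd (cst k z1) i r) j0 p).
  by rewrite !updE ia !eqxx vir eqxx E2.
split.
- move=> j hj; have -> : j = j0 by apply: ord_inj; rewrite (eqP hj).
  exact: u_centr hm comm.
- by rewrite -SD // vir.
- by move=> j hj; case: (SC j hj).
- have wi : w^-1 i = i by rewrite -SA // -/a ai.
  by rewrite -{1}wi permKV.
Qed.

Lemma commH m k (i : 'I_k) (r : 'I_m) (hi : 0 < i) (v : {ffun 'I_k -> {perm 'I_m}}) (w : {perm 'I_k}) :
  (forall j : 'I_k, (j : nat) == 0 -> v j \in U m) -> v i r = r ->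
  (forall j : 'I_k, (j : nat) == 0 -> w j = j) -> w i = i ->
  forall d : Delta m k, tauf i r (u m) (prodact v w d) = prodact v w (tauf i r (u m) d).
Proof.
move=> hv hr hw hwi d.
have hi' : (i : nat) != 0 by lia.
have wVi : w^-1 i = i by rewrite -{1}hwi permK.
apply/ffunP => j; case: (boolP ((j : nat) == 0)) => hj.
  have wVj : w^-1 j = j by rewrite -{1}(hw j hj) permK.
  rewrite (tauf_0 _ _ _ hi' hj) !prodactE wVj wVi (tauf_0 _ _ _ hi' hj).
  have -> : (v i (d i) == r) = (d i == r) by rewrite -{1}hr (inj_eq perm_inj).
  case: (d i == r) => //.
  have /cycleP [t ->] := hv j hj.
  by rewrite -!permM -expgS -expgSr.
rewrite tauf_ne0 // !prodactE tauf_ne0 //.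
apply/negP => h; have := hw _ h; rewrite permKV => e.
by move: hj; rewrite {1}e h.
Qed.

Theorem lemma4p3 (m k : nat) (hm : 5 <= m) (hk : 2 <= k)
  (i : 'I_k) (hi : 1 <= val i) (r : 'I_m) :
  exists2 x : {perm Delta m k}, x \in Alt (Delta m k) &
    Mprod m k :&: (Mprod m k :^ x) = Hsub i r.
Proof.
exists (tau i r (u m)); first exact: tau_even.
set x := tau i r (u m).
apply/setP => g; rewrite inE mem_conjg.
have xE : forall d, x d = tauf i r (u m) d by move=> d; rewrite permE.
have gxE : forall d, x ((g ^ x^-1) d) = g (x d).
  by move=> d; rewrite conjgE invgK !permM permKV.
apply/idP/idP.
  case/andP; rewrite !inE => /existsP [v /existsP [w /forallP gv]].
  move=> /existsP [v' /existsP [w' /forallP fv]].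
  have E : forall d, tauf i r (u m) (prodact v' w' d) = prodact v w (tauf i r (u m) d).
    by move=> d; rewrite -(eqP (fv d)) -(eqP (gv _)) -!xE gxE.
  have [h1 h2 h3 h4] := core hm hi E.
  apply/existsP; exists v; apply/existsP; exists w.
  apply/and4P; split.
  - by apply/forallP => j; apply/implyP; exact: h1.
  - by rewrite inE h2.
  - rewrite inE; apply/forallP => j; apply/implyP => /orP [/h3 -> //| /eqP ->].
    by rewrite h4.
  - exact/forallP.
rewrite /Hsub inE => /existsP [v /existsP [w /and4P [/forallP h1 h2 h3 /forallP gv]]].
have gM : g \in Mprod m k.
  by rewrite /Mprod inE; apply/existsP; exists v; apply/existsP; exists w; apply/forallP.
rewrite gM /=.
have -> : g ^ x^-1 = g.
  apply/permP => d; apply: (@perm_inj _ x); rewrite gxE !xE (eqP (gv d)) (eqP (gv _)).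
  symmetry; apply: commH => //.
  - by move=> j hj; exact: (implyP (h1 j) hj).
  - by move: h2; rewrite inE => /eqP.
  - by move=> j hj; move: h3; rewrite inE => /forallP /(_ j) /implyP; rewrite hj => /(_ isT) /eqP.
  - by move: h3; rewrite inE => /forallP /(_ i) /implyP; rewrite eqxx orbT => /(_ isT) /eqP.
exact: gM.
Qed.
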